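(* Let $\mathbf{C}$ be a category of $\mathbf{FI}$ type and $c_1,c_2$ objects. There is a natural isomorphism of functors $\mathbf{C}\to\mathbf{Set}$ $$\mathrm{Hom}(c_1,\bullet)\times\mathrm{Hom}(c_2,\bullet)\;\cong\;\coprod_{[d]}\mathrm{Hom}(d,\bullet)\times_{G_d}\mathrm{PO}_d(c_1,c_2),$$ where $[d]$ ranges over isomorphism classes of objects and $d$ is a chosen representative of $[d]$, and this isomorphism respects the right actions of $G_{c_1}\times G_{c_2}$ by precomposition on both sides.
   Context: A category $\mathbf{C}$ is of $\mathbf{FI}$ type if: (1) all Hom-sets are finite; (2) every morphism is a monomorphism and every endomorphism is an isomorphism; (3) for all objects $c,d$ the group $G_d=\mathrm{Aut}_{\mathbf{C}}(d)$ acts transitively on $\mathrm{Hom}_{\mathbf{C}}(c,d)$; (4) for every $d$ only finitely many isomorphism classes of $c$ have $\mathrm{Hom}(c,d)\neq\emptyset$; (5) every pair $c_1\to d\leftarrow c_2$ has a pullback, and every pair $f_i:p\to c_i$ has a weak push-out, i.e. a commutative square $g_i:c_i\to d$ ($g_1f_1=g_2f_2$) which is a pullback square and such that for every other pullback square $h_i:c_i\to z$ with $h_1f_1=h_2f_2$ there is a unique $h:d\to z$ with $hg_i=h_i$. The push-out set $\mathrm{PO}_d(c_1,c_2)$ is the set of pairs of morphisms $(g_1:c_1\to d,\ g_2:c_2\to d)$ such that the pullback square of $g_1,g_2$ (with corner $c_1\times_d c_2$) is a weak push-out square. $G_d$ acts on it on the left by postcomposition, and $G_{c_1}\times G_{c_2}$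 on the right by precomposition. $\mathrm{Hom}(d,x)\times_{G_d}\mathrm{PO}_d(c_1,c_2)$ is the quotient of the product by $(f\circ g,(r_1,r_2))\sim(f,(g\circ r_1,g\circ r_2))$ for $g\in G_d$. *)

(* Defs.v *)
From Stdlib Require Import List.
Set Implicit Arguments.

Record Category := {
  Obj :> Type;
  Hom : Obj -> Obj -> Type;
  comp : forall a b c : Obj, Hom b c -> Hom a b -> Hom a c;
  idm : forall a : Obj, Hom a a;
  comp_assoc : forall a b c d (h : Hom c d) (g : Hom b c) (f : Hom a b),
      comp h (comp g f) = comp (comp h g) f;
  comp_id_l : forall a b (f : Hom a b), comp (idm b) f = f;
  comp_id_r : forall a b (f : Hom a b), comp f (idm a) = f
}.

Arguments Hom {_} _ _.
Arguments comp {_ _ _ _} _ _.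
Arguments idm {_} _.

Section CatDefs.
Variable C : Category.

Definition is_iso {a b : C} (f : Hom a b) : Prop :=
  exists g : Hom b a, comp g f = idm a /\ comp f g = idm b.

Definition isomorphic (a b : C) : Prop := exists f : Hom a b, is_iso f.

Definition is_pullback {p c1 c2 d : C}
  (f1 : Hom p c1) (f2 : Hom p c2) (g1 : Hom c1 d) (g2 : Hom c2 d) : Prop :=
  comp g1 f1 = comp g2 f2 /\
  forall (q : C) (u1 : Hom q c1) (u2 : Hom q c2), comp g1 u1 = comp g2 u2 ->
    exists! u : Hom q p, comp f1 u = u1 /\ comp f2 u = u2.

Definition is_weak_pushout {p c1 c2 d : C}
  (f1 : Hom p c1) (f2 : Hom p c2) (g1 : Hom c1 d) (g2 : Hom c2 d) : Prop :=
  is_pullback f1 f2 g1 g2 /\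
  forall (z : C) (h1 : Hom c1 z) (h2 : Hom c2 z), is_pullback f1 f2 h1 h2 ->
    exists! h : Hom d z, comp h g1 = h1 /\ comp h g2 = h2.

Definition in_PO {c1 c2 d : C} (g1 : Hom c1 d) (g2 : Hom c2 d) : Prop :=
  exists (p : C) (f1 : Hom p c1) (f2 : Hom p c2), is_weak_pushout f1 f2 g1 g2.

Definition FI_type : Prop :=
  (forall c d : C, exists l : list (Hom c d), forall f, In f l) /\
  (forall (a b c : C) (f : Hom b c) (g h : Hom a b), comp f g = comp f h -> g = h) /\
  (forall (d : C) (f : Hom d d), is_iso f) /\
  (forall (c d : C) (f g : Hom c d), exists a : Hom d d, is_iso a /\ comp a f = g) /\
  (forall d : C, exists l : list C, forall c : C, inhabited (Hom c d) ->
       exists c', In c' l /\ isomorphic c c') /\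
  (forall (c1 c2 d : C) (g1 : Hom c1 d) (g2 : Hom c2 d),
       exists (p : C) (f1 : Hom p c1) (f2 : Hom p c2), is_pullback f1 f2 g1 g2) /\
  (forall (p c1 c2 : C) (f1 : Hom p c1) (f2 : Hom p c2),
       exists (d : C) (g1 : Hom c1 d) (g2 : Hom c2 d), is_weak_pushout f1 f2 g1 g2).

Definition iso_class_reps (Rep : C -> Prop) : Prop :=
  (forall c : C, exists d, Rep d /\ isomorphic c d) /\
  (forall d d' : C, Rep d -> Rep d' -> isomorphic d d' -> d = d').

End CatDefs.

Arguments is_iso {C a b} f.
Arguments isomorphic {C} a b.
Arguments is_pullback {C p c1 c2 d} f1 f2 g1 g2.
Arguments is_weak_pushout {C p c1 c2 d} f1 f2 g1 g2.
Arguments in_PO {C c1 c2 d} g1 g2.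
Arguments iso_class_reps {C} Rep.

(* Main.v *)
Require Import Defs.
Set Implicit Arguments.
Definition cA {C : Category} {a b c d : C} (h : Hom c d) (g : Hom b c) (f : Hom a b) :=
  @comp_assoc C a b c d h g f.

Section Aux.
Variable C : Category.
Hypothesis mono : forall (a b c : C) (f : Hom b c) (g h : Hom a b), comp f g = comp f h -> g = h.

Lemma pb_post (p c1 c2 d e : C) (f1 : Hom p c1) (f2 : Hom p c2) (g1 : Hom c1 d) (g2 : Hom c2 d)
  (m : Hom d e) : is_pullback f1 f2 g1 g2 -> is_pullback f1 f2 (comp m g1) (comp m g2).
Proof.
  intros [Hc Hu]. split.
  - rewrite <- !comp_assoc, Hc; reflexivity.
  - intros q u1 u2 E. apply Hu. apply (mono _ _ _ m). rewrite !comp_assoc; exact E.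
Qed.

Lemma wpo_post_iso (p c1 c2 d e : C) (f1 : Hom p c1) (f2 : Hom p c2) (g1 : Hom c1 d) (g2 : Hom c2 d)
  (phi : Hom d e) (psi : Hom e d) : is_weak_pushout f1 f2 g1 g2 ->
  comp psi phi = idm d -> comp phi psi = idm e ->
  is_weak_pushout f1 f2 (comp phi g1) (comp phi g2).
Proof.
  intros [Hp Hw] H1 H2. split. apply pb_post; auto.
  intros z h1 h2 Hq. destruct (Hw z h1 h2 Hq) as [k [[E1 E2] U]].
  exists (comp k psi). split.
  - split; rewrite <- comp_assoc, (cA psi phi), H1, comp_id_l; assumption.
  - intros k' [E1' E2'].
    assert (k = comp k' phi) as ->.
    { apply U. split; rewrite <- comp_assoc; assumption. }
    rewrite <- comp_assoc, H2, comp_id_r. reflexivity.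
Qed.

Lemma pb_pre_iso (p c1 c2 c1' c2' d : C) (f1 : Hom p c1) (f2 : Hom p c2) (g1 : Hom c1 d) (g2 : Hom c2 d)
  (a1 : Hom c1' c1) (b1 : Hom c1 c1') (a2 : Hom c2' c2) (b2 : Hom c2 c2') :
  comp a1 b1 = idm c1 -> comp a2 b2 = idm c2 ->
  comp b1 a1 = idm c1' -> comp b2 a2 = idm c2' ->
  is_pullback f1 f2 g1 g2 -> is_pullback (comp b1 f1) (comp b2 f2) (comp g1 a1) (comp g2 a2).
Proof.
  intros H1 H2 H1' H2' [Hc Hu]. split.
  - rewrite <- !comp_assoc, (cA a1 b1), (cA a2 b2), H1, H2, !comp_id_l. exact Hc.
  - intros q u1 u2 E. rewrite <- !comp_assoc in E.
    destruct (Hu q _ _ E) as [u [[F1 F2] U]]. exists u. split.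
    + split.
      * rewrite <- comp_assoc, F1, comp_assoc, H1', comp_id_l. reflexivity.
      * rewrite <- comp_assoc, F2, comp_assoc, H2', comp_id_l. reflexivity.
    + intros u' [G1 G2]. apply U. split.
      * rewrite <- G1, <- comp_assoc, (cA a1 b1), H1, comp_id_l. reflexivity.
      * rewrite <- G2, <- comp_assoc, (cA a2 b2), H2, comp_id_l. reflexivity.
Qed.

Lemma wpo_pre_iso (p c1 c2 c1' c2' d : C) (f1 : Hom p c1) (f2 : Hom p c2) (g1 : Hom c1 d) (g2 : Hom c2 d)
  (a1 : Hom c1' c1) (b1 : Hom c1 c1') (a2 : Hom c2' c2) (b2 : Hom c2 c2') :
  comp a1 b1 = idm c1 -> comp a2 b2 = idm c2 ->
  comp b1 a1 = idm c1' -> comp b2 a2 = idm c2' ->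
  is_weak_pushout f1 f2 g1 g2 -> is_weak_pushout (comp b1 f1) (comp b2 f2) (comp g1 a1) (comp g2 a2).
Proof.
  intros H1 H2 H1' H2' [Hp Hw]. split. apply pb_pre_iso; auto.
  intros z h1 h2 Hq.
  pose proof (@pb_pre_iso _ _ _ _ _ _ _ _ _ _ b1 a1 b2 a2 H1' H2' H1 H2 Hq) as Hq'.
  rewrite (cA a1 b1), (cA a2 b2), H1, H2, !comp_id_l in Hq'.
  destruct (Hw z _ _ Hq') as [k [[E1 E2] U]].
  exists k. split.
  - split; rewrite comp_assoc; [rewrite E1 | rewrite E2]; rewrite <- comp_assoc;
      [rewrite H1' | rewrite H2']; apply comp_id_r.
  - intros k' [G1 G2]. apply U. split.
    + rewrite <- G1, <- comp_assoc, <- (cA g1 a1 b1), H1, comp_id_r. reflexivity.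
    + rewrite <- G2, <- comp_assoc, <- (cA g2 a2 b2), H2, comp_id_r. reflexivity.
Qed.

Lemma L_hom (c1 c2 d d' x : C) (r1 : Hom c1 d) (r2 : Hom c2 d) (r1' : Hom c1 d') (r2' : Hom c2 d')
  (h : Hom d x) (h' : Hom d' x) : in_PO r1 r2 ->
  comp h r1 = comp h' r1' -> comp h r2 = comp h' r2' ->
  exists k : Hom d d', comp k r1 = r1' /\ comp k r2 = r2' /\ h = comp h' k.
Proof.
  intros [p [f1 [f2 [[Hc Hu] Hw]]]] E1 E2.
  assert (Hp : is_pullback f1 f2 r1' r2').
  { split.
    - apply (mono _ _ _ h'). rewrite !comp_assoc, <- E1, <- E2, <- !comp_assoc, Hc. reflexivity.
    - intros q v1 v2 E. apply Hu. apply (mono _ _ _ h).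
      rewrite !comp_assoc, E1, E2, <- !comp_assoc, E. reflexivity. }
  destruct (Hw _ _ _ Hp) as [k [[K1 K2] _]].
  exists k. split; [exact K1|split; [exact K2|]].
  destruct (Hw _ (comp h r1) (comp h r2) (@pb_post _ _ _ _ _ _ _ _ _ h (conj Hc Hu))) as [m [_ U]].
  transitivity m.
  - symmetry; apply U; split; reflexivity.
  - apply U. rewrite <- !comp_assoc, K1, K2. split; symmetry; assumption.
Qed.
End Aux.

Theorem mainTheorem9 (C : Category) (HC : FI_type C) (c1 c2 : C)
  (Rep : C -> Prop) (HRep : iso_class_reps Rep) :
  exists Phi : forall (x d : C), Hom d x -> Hom c1 d -> Hom c2 d ->
                 (Hom c1 x * Hom c2 x)%type,
    (forall (x y : C) (f : Hom x y) (d : C) (h : Hom d x)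
            (r1 : Hom c1 d) (r2 : Hom c2 d),
        Rep d -> in_PO r1 r2 ->
        Phi y d (comp f h) r1 r2
        = (comp f (fst (Phi x d h r1 r2)), comp f (snd (Phi x d h r1 r2)))) /\
    (forall (x : C) (u1 : Hom c1 x) (u2 : Hom c2 x),
        exists (d : C) (h : Hom d x) (r1 : Hom c1 d) (r2 : Hom c2 d),
          Rep d /\ in_PO r1 r2 /\ Phi x d h r1 r2 = (u1, u2)) /\
    (forall (x d d' : C) (h : Hom d x) (r1 : Hom c1 d) (r2 : Hom c2 d)
            (h' : Hom d' x) (r1' : Hom c1 d') (r2' : Hom c2 d'),
        Rep d -> Rep d' -> in_PO r1 r2 -> in_PO r1' r2' ->
        Phi x d h r1 r2 = Phi x d' h' r1' r2' -> d = d') /\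
    (forall (x d : C) (h h' : Hom d x) (r1 r1' : Hom c1 d) (r2 r2' : Hom c2 d),
        Rep d -> in_PO r1 r2 -> in_PO r1' r2' ->
        (Phi x d h r1 r2 = Phi x d h' r1' r2' <->
         exists g : Hom d d, is_iso g /\ h = comp h' g /\
                             r1' = comp g r1 /\ r2' = comp g r2)) /\
    (forall (x d : C) (h : Hom d x) (r1 : Hom c1 d) (r2 : Hom c2 d)
            (a1 : Hom c1 c1) (a2 : Hom c2 c2),
        Rep d -> in_PO r1 r2 -> is_iso a1 -> is_iso a2 ->
        in_PO (comp r1 a1) (comp r2 a2) /\
        Phi x d h (comp r1 a1) (comp r2 a2)
        = (comp (fst (Phi x d h r1 r2)) a1, comp (snd (Phi x d h r1 r2)) a2)).
Proof.
  destruct HC as (Hfin & Hmono & Hendo & Htrans & Hfinite & Hpb & Hwpo).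
  destruct HRep as [Hrep1 Hrep2].
  exists (fun x d h r1 r2 => (comp h r1, comp h r2)).
  split; [|split; [|split; [|split]]].
  - intros. simpl. rewrite !comp_assoc. reflexivity.
  - intros x u1 u2.
    destruct (Hpb _ _ _ u1 u2) as [p [f1 [f2 Hp]]].
    destruct (Hwpo _ _ _ f1 f2) as [d0 [g1 [g2 [Hp0 Hw0]]]].
    destruct (Hw0 _ _ _ Hp) as [h0 [[E1 E2] _]].
    destruct (Hrep1 d0) as [d [Rd [phi [psi [P1 P2]]]]].
    exists d, (comp h0 psi), (comp phi g1), (comp phi g2).
    split; [exact Rd|split].
    + exists p, f1, f2. eapply wpo_post_iso with (psi := psi); eauto. split; assumption.
    + rewrite <- !comp_assoc, (cA psi phi g1), (cA psi phi g2), P1, !comp_id_l, E1, E2.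
      reflexivity.
  - intros x d d' h r1 r2 h' r1' r2' Rd Rd' P P' E.
    injection E as E1 E2.
    destruct (@L_hom _ Hmono _ _ _ _ _ _ _ _ _ h h' P E1 E2) as [k _].
    destruct (@L_hom _ Hmono _ _ _ _ _ _ _ _ _ h' h P' (eq_sym E1) (eq_sym E2)) as [k' _].
    apply Hrep2; auto.
    destruct (Hendo d' (comp k k')) as [n [N1 N2]].
    exists k, (comp k' n). split.
    + apply (Hmono _ _ _ k). rewrite comp_assoc, (cA k k' n), N2, comp_id_l, comp_id_r.
      reflexivity.
    + rewrite comp_assoc. exact N2.
  - intros x d h h' r1 r1' r2 r2' Rd P P'. split.
    + intros E. injection E as E1 E2.
      destruct (@L_hom _ Hmono _ _ _ _ _ _ _ _ _ h h' P E1 E2) as [k [K1 [K2 K3]]].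
      exists k. split; [apply Hendo|]. split; [exact K3|split; symmetry; assumption].
    + intros [g [_ [-> [-> ->]]]]. rewrite !comp_assoc. reflexivity.
  - intros x d h r1 r2 a1 a2 Rd [p [f1 [f2 W]]] [b1 [B1 B1']] [b2 [B2 B2']].
    split.
    + exists p, (comp b1 f1), (comp b2 f2). apply wpo_pre_iso; auto.
    + simpl. rewrite !comp_assoc. reflexivity.
Qed.
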